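(* Let $G$ be a finite group, let $\mathcal{H}$ be a finite-dimensional Hilbert space, and let $f: G \to U(\mathcal{H})$ be an arbitrary function (not necessarily a homomorphism). Then there exist a finite-dimensional Hilbert space $\mathcal{H}'$, an isometry $V: \mathcal{H} \to \mathcal{H}'$, and a unitary representation $\pi: G \to U(\mathcal{H}')$ of $G$ such that for every probability measure $\mu$ on $G$, every normalised density operator $\psi$ on $\mathcal{H}$, and every $\epsilon \ge 0$: \[ \mathbb{E}_{g \sim \mu,\, h \sim G} \| f(h) f(g) - f(hg) \|_\psi^2 \leq \epsilon \quad\Longrightarrow\quad \mathbb{E}_{g \sim \mu} \| f(g) - V^\dagger \pi(g) V \|_\psi^2 \leq \epsilon, \] where $h \sim G$ denotes a uniformly random element of $G$. (Note that $V$ and $\pi$ depend only on $f$, not on $\mu$, $\psi$ or $\epsilon$.)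
   Context: $U(\mathcal{H})$ denotes the set of unitary operators on $\mathcal{H}$. For a positive semidefinite operator $\psi$ on $\mathcal{H}$ and a linear operator $A$ on $\mathcal{H}$, the state-dependent (semi)norm is $\|A\|_\psi^2 := \mathrm{Tr}[A^\dagger A \psi]$. *)

(* Defs.v *)
From HB Require Import structures.
From mathcomp Require Import all_boot all_order all_algebra all_fingroup.
From mathcomp Require Export mxrepresentation.
Set Implicit Arguments. Unset Strict Implicit. Unset Printing Implicit Defensive.
Import Order.TTheory GRing.Theory Num.Theory.
Local Open Scope ring_scope.

(* Scalars: an arbitrary numeric algebraically closed field C (e.g. the complex
   numbers); a finite-dimensional Hilbert space of dimension n is 'cV[C]_n with
   the standard inner product <u,v> = (u^* v). *)

Definition adj (C : numClosedFieldType) m n (A : 'M[C]_(m, n)) : 'M[C]_(n, m) :=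
  (map_mx Num.conj A)^T.

(* A is unitary: A^dagger A = 1 (on a finite-dimensional space, equivalent to
   A A^dagger = 1 as well) *)
Definition unitary (C : numClosedFieldType) n (A : 'M[C]_n) : Prop :=
  adj A *m A = 1%:M /\ A *m adj A = 1%:M.

Definition isometry_mx (C : numClosedFieldType) m n (V : 'M[C]_(m, n)) : Prop :=
  adj V *m V = 1%:M.

Definition psd (C : numClosedFieldType) n (psi : 'M[C]_n) : Prop :=
  adj psi = psi /\ forall v : 'cV[C]_n, 0 <= (adj v *m psi *m v) 0 0.

Definition density (C : numClosedFieldType) n (psi : 'M[C]_n) : Prop :=
  psd psi /\ \tr psi = 1.

Definition sqnorm_st (C : numClosedFieldType) n (psi A : 'M[C]_n) : C :=
  \tr (adj A *m A *m psi).

Definition prob_measure (C : numClosedFieldType) (T : finType) (mu : T -> C) : Prop :=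
  (forall t, 0 <= mu t) /\ \sum_t mu t = 1.

(* Main.v *)
Require Import Defs.
From HB Require Import structures.
From mathcomp Require Import all_boot all_order all_algebra all_fingroup mxrepresentation.
Import Order.TTheory GRing.Theory Num.Theory.
Local Open Scope ring_scope.

Lemma madjM (C : numClosedFieldType) m n p (A : 'M[C]_(m, n)) (B : 'M[C]_(n, p)) :
  adj (A *m B) = adj B *m adj A.
Proof. by rewrite /adj map_mxM trmx_mul. Qed.

Lemma madjK (C : numClosedFieldType) m n (A : 'M[C]_(m, n)) : adj (adj A) = A.
Proof. by apply/matrixP=> i j; rewrite !mxE conjCK. Qed.

Lemma madjD (C : numClosedFieldType) m n (A B : 'M[C]_(m, n)) : adj (A + B) = adj A + adj B.
Proof. by apply/matrixP=> i j; rewrite !mxE rmorphD. Qed.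

Lemma madjN (C : numClosedFieldType) m n (A : 'M[C]_(m, n)) : adj (- A) = - adj A.
Proof. by apply/matrixP=> i j; rewrite !mxE rmorphN. Qed.

Lemma madjB (C : numClosedFieldType) m n (A B : 'M[C]_(m, n)) : adj (A - B) = adj A - adj B.
Proof. by rewrite madjD madjN. Qed.

Lemma madjZ (C : numClosedFieldType) m n a (A : 'M[C]_(m, n)) : adj (a *: A) = a^* *: adj A.
Proof. by apply/matrixP=> i j; rewrite !mxE rmorphM. Qed.

Lemma madj_sum (C : numClosedFieldType) m n (I : finType) (F : I -> 'M[C]_(m, n)) :
  adj (\sum_i F i) = \sum_i adj (F i).
Proof.
apply/matrixP=> i j; rewrite !mxE !summxE rmorph_sum; apply: eq_bigr => k _.
by rewrite !mxE.
Qed.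

Lemma madj1 (C : numClosedFieldType) n : adj (1%:M : 'M[C]_n) = 1%:M.
Proof. by apply/matrixP=> i j; rewrite !mxE rmorph_nat eq_sym. Qed.

Definition sesq (C : numClosedFieldType) n (psi X Y : 'M[C]_n) : C :=
  \tr (adj X *m Y *m psi).

Lemma sqnorm_ge0 (C : numClosedFieldType) n (psi X : 'M[C]_n) :
  psd psi -> 0 <= sqnorm_st psi X.
Proof.
move=> [_ Hp]; rewrite /sqnorm_st -mulmxA mxtrace_mulC.
rewrite /mxtrace; apply: sumr_ge0 => i _.
pose v : 'cV[C]_n := \matrix_(b, _) adj X b i.
have := Hp v; congr (_ <= _).
rewrite !mxE; apply: eq_bigr => b _; rewrite !mxE; congr (_ * _).
apply: eq_bigr => a _; rewrite !mxE conjCK //.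
Qed.

Lemma tr_sum_l (C : numClosedFieldType) n (I : finType) (B : I -> 'M[C]_n) (Y psi : 'M[C]_n) :
  \sum_i \tr (adj (B i) *m Y *m psi) = \tr (adj (\sum_i B i) *m Y *m psi).
Proof. by rewrite madj_sum !mulmx_suml raddf_sum. Qed.

Lemma tr_sum_r (C : numClosedFieldType) n (I : finType) (B : I -> 'M[C]_n) (X psi : 'M[C]_n) :
  \sum_i \tr (adj X *m B i *m psi) = \tr (adj X *m (\sum_i B i) *m psi).
Proof. by rewrite mulmx_sumr mulmx_suml raddf_sum. Qed.

Lemma avg_le (C : numClosedFieldType) n (I : finType) (B : I -> 'M[C]_n) (psi : 'M[C]_n) :
  psd psi -> (0 < #|I|)%N ->
  sqnorm_st psi ((#|I|%:R)^-1 *: \sum_i B i) <= (#|I|%:R)^-1 * \sum_i sqnorm_st psi (B i).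
Proof.
move=> Hpsi HI.
set k : C := #|I|%:R.
have k0 : 0 < k by rewrite ltr0n.
have kn0 : k != 0 by rewrite gt_eqF.
pose D := k^-1 *: \sum_i B i.
have HS : \sum_i B i = k *: D by rewrite /D scalerA divff // scale1r.
clearbody D.
rewrite HS scalerA mulVf // scale1r.
have E i : sqnorm_st psi (B i - D) = sqnorm_st psi (B i) - \tr (adj (B i) *m D *m psi)
     - \tr (adj D *m B i *m psi) + sqnorm_st psi D.
  rewrite /sqnorm_st madjB mulmxBl !mulmxBr !mulmxBl !raddfB /=.
  by rewrite opprK addrA.
have Heq : \sum_i sqnorm_st psi (B i - D) = \sum_i sqnorm_st psi (B i) - k * sqnorm_st psi D.
  under eq_bigr do rewrite E.
  rewrite !big_split /= !sumrN tr_sum_l tr_sum_r HS sumr_const.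
  rewrite madjZ rmorph_nat -!scalemxAl -scalemxAr -scalemxAl !mxtraceZ.
  rewrite /sqnorm_st -[X in _ + X]mulr_natl subrK.
  by [].
have H0 : 0 <= \sum_i sqnorm_st psi (B i - D).
  by apply: sumr_ge0 => i _; apply: sqnorm_ge0.
rewrite Heq subr_ge0 in H0.
by rewrite ler_pdivlMl.
Qed.

Lemma adj_mxcol (C : numClosedFieldType) p (p_ : 'I_p -> nat) m (B : forall i, 'M[C]_(p_ i, m)) :
  adj (\mxcol_i B i) = \mxrow_i adj (B i).
Proof. by apply/matrixP => i j; rewrite !mxE. Qed.

Lemma adj_mxblock (C : numClosedFieldType) p (p_ : 'I_p -> nat) (B : forall i j, 'M[C]_(p_ i, p_ j)) :
  adj (\mxblock_(i, j) B i j) = \mxblock_(i, j) adj (B j i).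
Proof. by apply/matrixP => i j; rewrite !mxE. Qed.

Definition ev (gT : finGroupType) (i : 'I_#|gT|) : gT := enum_val i.
Arguments ev {gT}.
Definition sh (gT : finGroupType) (g : gT) (i : 'I_#|gT|) : 'I_#|gT| := enum_rank (ev i * g)%g.

Arguments sh {gT}.
Lemma ev_sh (gT : finGroupType) (g : gT) (i : 'I_#|gT|) : ev (sh g i) = (ev i * g)%g.
Proof. by rewrite /sh /ev enum_rankK. Qed.

Lemma sh_eq (gT : finGroupType) (g : gT) (i j : 'I_#|gT|) : (j == sh g i) = (ev j == ev i * g)%g.
Proof.
rewrite -ev_sh; apply/eqP/eqP => [->//|]; rewrite /ev => /enum_val_inj //.
Qed.

Definition pim (C : numClosedFieldType) (gT : finGroupType) n (g : gT) :
  'M[C]_(\sum_(i < #|gT|) n) :=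
  \mxblock_(i, j) ((j == sh g i)%:R *: (1%:M : 'M[C]_n)).

Arguments pim {C gT} n g.
Lemma pim1 (C : numClosedFieldType) (gT : finGroupType) n : pim n (1%g : gT) = 1%:M :> 'M[C]_(\sum_(i < #|gT|) n).
Proof.
rewrite -(mxdiagZ (p_ := fun _ : 'I_#|gT| => n) (1 : C)) /mxdiag /pim.
apply: eq_mxblock => i j; rewrite sh_eq mulg1 (inj_eq enum_val_inj) eq_sym.
by case: eqP => _; rewrite ?conform_mx_id ?scale1r ?scale0r.
Qed.

Lemma pimM (C : numClosedFieldType) (gT : finGroupType) n (g h : gT) :
  @pim C gT n g *m pim n h = pim n (g * h)%g.
Proof.
rewrite /pim mul_mxblock; apply: eq_mxblock => i l.
under eq_bigr do rewrite -scalemxAl -scalemxAr scalerA mul1mx.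
rewrite -scaler_suml; congr (_ *: _).
rewrite (bigD1 (sh g i)) //= big1 ?addr0 => [|j /negbTE ->]; last by rewrite mul0r.
by rewrite eqxx mul1r !sh_eq ev_sh mulgA.
Qed.

Lemma adj_pim (C : numClosedFieldType) (gT : finGroupType) n (g : gT) :
  adj (@pim C gT n g) = pim n g^-1.
Proof.
rewrite /pim adj_mxblock; apply: eq_mxblock => i j.
rewrite madjZ madj1 rmorph_nat !sh_eq; congr ((_ : bool)%:R *: _).
by apply/eqP/eqP => ->; rewrite ?mulgK ?mulgKV.
Qed.

Lemma pim_unitary (C : numClosedFieldType) (gT : finGroupType) n (g : gT) :
  unitary (@pim C gT n g).
Proof. by rewrite /unitary adj_pim !pimM mulVg mulgV pim1. Qed.

Definition cst (C : numClosedFieldType) (k : nat) : C := (sqrtC (k%:R))^-1.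

Lemma cst_sq (C : numClosedFieldType) k : (cst C k)^* * cst C k = (k%:R)^-1.
Proof.
have c0 : 0 <= cst C k by rewrite /cst invr_ge0 sqrtC_ge0 ler0n.
by rewrite geC0_conj // /cst -invfM -expr2 sqrtCK.
Qed.

Definition Vm (C : numClosedFieldType) (gT : finGroupType) n (f : gT -> 'M[C]_n) :
  'M[C]_(\sum_(i < #|gT|) n, n) := \mxcol_i (cst C #|gT| *: f (ev i)).

Arguments Vm {C gT n} f.
Lemma card_pos (gT : finGroupType) : (0 < #|gT|)%N.
Proof. by apply/card_gt0P; exists 1%g. Qed.

Lemma Vm_iso (C : numClosedFieldType) (gT : finGroupType) n (f : gT -> 'M[C]_n) :
  (forall g, unitary (f g)) -> isometry_mx (Vm f).
Proof.
move=> fu; rewrite /isometry_mx /Vm adj_mxcol mul_mxrow_mxcol.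
under eq_bigr do rewrite madjZ -scalemxAl -scalemxAr scalerA cst_sq (proj1 (fu _)).
rewrite sumr_const card_ord -scaler_nat scalerA mulrC mulVf ?scale1r //.
by rewrite pnatr_eq0 -lt0n card_pos.
Qed.

Lemma pimV (C : numClosedFieldType) (gT : finGroupType) n (f : gT -> 'M[C]_n) (g : gT) :
  pim n g *m Vm f = \mxcol_i (cst C #|gT| *: f (ev i * g)%g).
Proof.
rewrite /pim /Vm mul_mxblock_mxrow; apply: eq_mxcol => i.
rewrite (bigD1 (sh g i)) //= big1 ?addr0 => [|j /negbTE ->]; last by rewrite scale0r mul0mx.
by rewrite eqxx scale1r mul1mx ev_sh.
Qed.

Lemma VpiV (C : numClosedFieldType) (gT : finGroupType) n (f : gT -> 'M[C]_n) (g : gT) :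
  adj (Vm f) *m pim n g *m Vm f =
  (#|gT|%:R)^-1 *: \sum_i adj (f (ev i)) *m f (ev i * g)%g.
Proof.
rewrite -mulmxA pimV /Vm adj_mxcol mul_mxrow_mxcol scaler_sumr.
apply: eq_bigr => i _.
by rewrite madjZ -scalemxAl -scalemxAr scalerA cst_sq.
Qed.

Lemma sqnorm_unit (C : numClosedFieldType) n (psi U A : 'M[C]_n) :
  unitary U -> sqnorm_st psi (adj U *m A) = sqnorm_st psi A.
Proof.
move=> [_ HU]; rewrite /sqnorm_st madjM madjK.
by rewrite -!mulmxA [U *m _]mulmxA HU mul1mx.
Qed.


Theorem theorem3p1 (C : numClosedFieldType) (gT : finGroupType) (n : nat)
    (f : gT -> 'M[C]_n) (f_unitary : forall g, unitary (f g)) :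
  exists (m : nat) (V : 'M[C]_(m, n)) (pi : gT -> 'M[C]_m),
    [/\ isometry_mx V,
        (forall g, unitary (pi g)),
        mx_repr [set: gT] pi &
        forall (mu : gT -> C) (psi : 'M[C]_n) (eps : C),
          prob_measure mu -> density psi -> 0 <= eps ->
          \sum_(g : gT) mu g *
            ((#|gT|%:R)^-1 * \sum_(h : gT)
               sqnorm_st psi (f h *m f g - f (h * g)%g)) <= eps ->
          \sum_(g : gT) mu g * sqnorm_st psi (f g - adj V *m pi g *m V) <= eps].
Proof.
exists (\sum_(i < #|gT|) n), (Vm f), (pim n).
split.
- exact: Vm_iso.
- exact: pim_unitary.
- by split; [exact: pim1 | move=> x y _ _; rewrite pimM].
move=> mu psi eps [mu0 _] [Hpsi _] _ Hle.
apply: le_trans; last exact: Hle.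
 apply: ler_sum => g _; apply: (ler_wpM2l (mu0 g)).
rewrite VpiV.
pose B i := adj (f (ev i)) *m (f (ev i) *m f g - f (ev i * g)%g).
have -> : f g - (#|gT|%:R)^-1 *: \sum_i adj (f (ev i)) *m f (ev i * g)%g =
          (#|'I_#|gT| |%:R)^-1 *: \sum_i B i.
  rewrite card_ord.
  have EB i : B i = f g - adj (f (ev i)) *m f (ev i * g)%g.
    by rewrite /B mulmxBr mulmxA (proj1 (f_unitary _)) mul1mx.
  under [X in _ = _ *: X]eq_bigr do rewrite EB.
  rewrite sumrB sumr_const card_ord scalerBr -scaler_nat scalerA mulVf ?scale1r //.
  by rewrite pnatr_eq0 -lt0n card_pos.
have H := @avg_le _ _ _ B psi Hpsi (ltac:(by rewrite card_ord card_pos)).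
apply: le_trans H _.
rewrite card_ord le_eqVlt; apply/orP; left; apply/eqP; congr (_ * _).
under eq_bigr do rewrite /B sqnorm_unit //.
rewrite [RHS](reindex ev) //.
exact: onW_bij (enum_val_bij gT).
Qed.
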